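(* The singular locus $\operatorname{Sing}(\widetilde{\mathfrak I})$ of the left ideal $\widetilde{\mathfrak I}$ of $\widetilde D_m$ generated by $\widetilde\ell_1,\dots,\widetilde\ell_m$ is contained in $S(z)=\{z\in\mathbb C^m\mid z_1\cdots z_m R(z)=0\}$.
   Context: $\widetilde D_m=\mathbb C\langle z_1,\dots,z_m,\widetilde\partial_1,\dots,\widetilde\partial_m\rangle$ is the Weyl algebra ($\widetilde\partial_k=\partial/\partial z_k$). For parameters $a_1,\dots,a_p\in\mathbb C$, $b_{j,k}\in\mathbb C$ ($1\le j\le p-1$), $b_{p,k}=1$: $\widetilde\ell_k=\prod_{i=1}^p(\tfrac1p z_k\widetilde\partial_k+b_{i,k}-1)-z_k^p\prod_{i=1}^p(\tfrac1p\sum_{j=1}^m z_j\widetilde\partial_j+a_i)$. $R(z)=\prod_{(i_1,\dots,i_m)\in\{1,\dots,p\}^m}(1-\zeta_p^{i_1}z_1-\cdots-\zeta_p^{i_m}z_m)$, $\zeta_p=e^{2\pi\sqrt{-1}/p}$. Singular locus of a left ideal $\mathfrak J$: Zariski closure of the projection to $z$-space of $\operatorname{Ch}(\mathfrak J)\setminus\{\xi=0\}$, where $\operatorname{Ch}(\mathfrak J)$ is the common zero set in $\mathbb C^{2m}$ of the principal symbols (w.r.t. order filtration) of all elements of $\mathfrak J$. *)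

(* Defs.v *)
From HB Require Import structures.
From Stdlib Require Import Reals.
From mathcomp Require Import all_boot all_order all_algebra.
From mathcomp Require Import Rstruct.
From mathcomp Require Import complex.
From mathcomp Require Import mpoly.
Set Implicit Arguments. Unset Strict Implicit. Unset Printing Implicit Defensive.
Import Order.TTheory GRing.Theory Num.Theory.
Local Open Scope ring_scope.

Notation CC := (Rcomplex R).

Definition zeta (p : nat) : CC :=
  Complex (cos (2 * PI / p%:R)) (sin (2 * PI / p%:R)).

(* An element is stored in
   its (unique) normal-ordered form  sum_beta a_beta(z) d^beta,  i.e. as a
   polynomial in the (commuting) symbols d_1..d_m whose coefficients are
   polynomials in z_1..z_m.  Addition is that of polynomials; the
   (noncommutative) product is [wmul] below. *)
Definition weyl (m : nat) := {mpoly {mpoly CC[m]}[m]}.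

Definition wz m (k : 'I_m) : weyl m := ('X_k : {mpoly CC[m]})%:MP.
Definition wd m (k : 'I_m) : weyl m := 'X_k.
Definition wc m (c : CC) : weyl m := (c%:MP : {mpoly CC[m]})%:MP.

(* left multiplication by d_i :
   d_i (c(z) d^delta) = (d c/d z_i) d^delta + c(z) d^(delta + e_i) *)
Definition dleft m (i : 'I_m) (Q : weyl m) : weyl m :=
  map_mpoly (mderiv i) Q + 'X_i * Q.

Definition dpow m (beta : 'X_{1..m}) (Q : weyl m) : weyl m :=
  foldr (fun i Q' => iter (beta i) (dleft i) Q') Q (enum 'I_m).

Definition zleft m (a : {mpoly CC[m]}) (Q : weyl m) : weyl m := a%:MP * Q.

Definition wmul m (P Q : weyl m) : weyl m :=
  \sum_(beta <- msupp P) zleft (P@_beta) (dpow beta Q).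

Definition wone m : weyl m := 1.

(* The operators  l_k  (b : 'I_p -> 'I_m -> CC with b_{p,k} = 1 imposed in
   the theorem; index i : 'I_p stands for i+1 in the paper). *)
Definition ell (m p : nat) (a : 'I_p -> CC) (b : 'I_p -> 'I_m -> CC)
    (k : 'I_m) : weyl m :=
  \big[@wmul m / wone m]_(i < p)
      (wmul (wc m (p%:R^-1)) (wmul (wz k) (wd k)) + wc m (b i k - 1))
  - wmul (\big[@wmul m / wone m]_(i < p) wz k)
         (\big[@wmul m / wone m]_(i < p)
             (wmul (wc m (p%:R^-1)) (\sum_(j < m) wmul (wz j) (wd j)) + wc m (a i))).

Definition in_left_ideal m (n : nat) (g : 'I_n -> weyl m) (P : weyl m) : Prop :=
  exists Q : 'I_n -> weyl m, P = \sum_(k < n) wmul (Q k) (g k).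

(* principal symbol w.r.t. the order filtration, evaluated at (z, xi):
   sum over the monomials of maximal order in d of a_beta(z) xi^beta
   (the symbol of 0 is 0). *)
Definition psymb m (P : weyl m) (z xi : 'I_m -> CC) : CC :=
  \sum_(beta <- msupp P | mdeg beta == (msize P).-1)
     (P@_beta).@[z] * \prod_(i < m) xi i ^+ beta i.

Definition charvar m (J : weyl m -> Prop) (z xi : 'I_m -> CC) : Prop :=
  forall P, J P -> psymb P z xi = 0.

Definition zariski_closure m (A : ('I_m -> CC) -> Prop) (x : 'I_m -> CC)
  : Prop :=
  forall f : {mpoly CC[m]}, (forall y, A y -> f.@[y] = 0) -> f.@[x] = 0.

Definition sing_locus m (J : weyl m -> Prop) (x : 'I_m -> CC) : Prop :=
  zariski_closure (fun z => exists xi, (exists k, xi k != 0) /\ charvar J z xi) x.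

Definition Rpoly (m p : nat) (z : 'I_m -> CC) : CC :=
  \prod_(t : {ffun 'I_m -> 'I_p})
     (1 - \sum_(j < m) zeta p ^+ (t j).+1 * z j).

(* Main.v *)
Require Import Defs.
From HB Require Import structures.
From Stdlib Require Import Reals.
From Stdlib Require Import Lra Psatz.
From mathcomp Require Import all_boot all_order all_algebra.
From mathcomp Require Import Rstruct complex mpoly.
From mathcomp Require Import zify.
Import Order.TTheory GRing.Theory Num.Theory.
Local Open Scope ring_scope.
Set Implicit Arguments. Unset Strict Implicit.


Section Grad.
Variable F : fieldType.
Variable m : nat.
Local Notation W := {mpoly {mpoly F[m]}[m]}.
Definition gdleft (i : 'I_m) (Q : W) : W :=
  map_mpoly (mderiv i) Q + 'X_i * Q.
Definition gdpow (beta : 'X_{1..m}) (Q : W) : W :=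
  foldr (fun i Q' => iter (beta i) (gdleft i) Q') Q (enum 'I_m).
Definition gwmul (P Q : W) : W :=
  \sum_(beta <- msupp P) (P@_beta)%:MP * (gdpow beta Q).

Local Notation top d P := (pihomog mdeg d (P : W)).

Lemma top0 (P : W) d : (msize P <= d)%N -> top d P = 0.
Proof.
move=> h; rewrite pihomogE big_seq_cond big_pred0 // => beta.
apply/negbTE/negP=> /andP[/msize_mdeg_lt lt /eqP e].
by move: (leq_trans lt h); rewrite e ltnn.
Qed.

Lemma topC (P : W) : (msize P <= 1)%N -> top 0 P = P.
Proof.
move=> h; rewrite [in RHS](pihomog_partitionE h) big_ord1 //.
Qed.

Lemma msize_homog (P : W) d : P \is d.-homog -> (msize P <= d.+1)%N.
Proof.
move/dhomogP=> h; rewrite msizeE; apply/bigmax_leqP_seq => beta /h -> //.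
Qed.

Lemma msize_sum_le (I : Type) (r : seq I) (Pr : pred I) (G : I -> W) N :
  (forall i, Pr i -> msize (G i) <= N)%N -> (msize (\sum_(i <- r | Pr i) G i) <= N)%N.
Proof.
move=> h; elim/big_ind: _ => //; first by rewrite msize0.
by move=> x y hx hy; apply: leq_trans (msizeD_le _ _) _; rewrite geq_max hx hy.
Qed.

Lemma mulP (P Q : W) n1 n2 : (msize P <= n1.+1)%N -> (msize Q <= n2.+1)%N ->
  (msize (P * Q) <= (n1 + n2).+1)%N /\ top (n1 + n2) (P * Q) = top n1 P * top n2 Q.
Proof.
move=> hP hQ.
have eP := pihomog_partitionE hP; have eQ := pihomog_partitionE hQ.
have -> : P * Q = \sum_(d1 < n1.+1) \sum_(d2 < n2.+1) (top d1 P * top d2 Q).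
  by rewrite {1}eP {1}eQ big_distrl /=; apply: eq_bigr => i _; rewrite big_distrr.
have hom d1 d2 : top d1 P * top d2 Q \is (d1 + d2).-homog.
  by apply: dhomogM; apply: pihomogP.
split.
  apply: msize_sum_le => d1 _; apply: msize_sum_le => d2 _.
  apply: leq_trans (msize_homog (hom d1 d2)) _.
  by rewrite ltnS leq_add // -ltnS.
rewrite raddf_sum /= big_ord_recr /= big1 ?add0r; last first.
  move=> d1 _; rewrite raddf_sum big1 // => d2 _.
  apply: (pihomog_ne0 _ (hom _ _)); apply/eqP => e.
  by have := ltn_ord d1; have := ltn_ord d2; lia.
rewrite raddf_sum big_ord_recr /= big1 ?add0r; last first.
  move=> d2 _; apply: (pihomog_ne0 _ (hom _ _)); apply/eqP => e.
  by have := ltn_ord d2; lia.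
by rewrite pihomog_dE.
Qed.

Lemma msize_mapd i (Q : W) : (msize (map_mpoly (mderiv i) Q) <= msize Q)%N.
Proof.
rewrite msizeE; apply/bigmax_leqP_seq => beta hb _; apply: msize_mdeg_lt.
rewrite mcoeff_msupp in hb *; rewrite mcoeff_map_mpoly in hb.
rewrite mcoeff_msupp. by apply: contra_neq hb => ->; rewrite raddf0.
Qed.

Lemma msizeXi i : (msize ('X_i : W) <= 2)%N.
Proof. by rewrite msizeX mdeg1. Qed.

Lemma topX i : top 1 ('X_i : W) = 'X_i.
Proof. rewrite pihomogX; have -> : (mdeg U_(i) == 1)%N by apply/eqP/mdeg1. by []. Qed.

Lemma dleftP i (Q : W) n : (msize Q <= n.+1)%N ->
  (msize (gdleft i Q) <= (1 + n).+1)%N /\ top (1 + n) (gdleft i Q) = 'X_i * top n Q.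
Proof.
move=> hQ; have [h1 h2] := mulP (msizeXi i) hQ.
have hm := leq_trans (msize_mapd i Q) hQ.
rewrite add1n in h1 h2 *.
split.
  rewrite /gdleft; apply: leq_trans (msizeD_le _ _) _. rewrite geq_max h1 andbT.
  by apply: leq_trans hm _.
by rewrite /gdleft pihomogD (top0 hm) h2 topX; exact: add0r.
Qed.

Lemma iterP i k (Q : W) n : (msize Q <= n.+1)%N ->
  (msize (iter k (gdleft i) Q) <= (k + n).+1)%N /\ top (k + n) (iter k (gdleft i) Q) = 'X_i ^+ k * top n Q.
Proof.
move=> hQ; elim: k => [|k [ih1 ih2]]; first by rewrite expr0 mul1r.
have [h1 h2] := dleftP i ih1.
by rewrite iterS -addSn -add1n h2 ih2 mulrA -exprS; split.
Qed.

Lemma foldP (beta : 'X_{1..m}) (s : seq 'I_m) (Q : W) n : (msize Q <= n.+1)%N ->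
  (msize (foldr (fun i Q' => iter (beta i) (gdleft i) Q') Q s)
     <= ((\sum_(i <- s) beta i) + n).+1)%N /\ top ((\sum_(i <- s) beta i) + n) (foldr (fun i Q' => iter (beta i) (gdleft i) Q') Q s)
   = (\prod_(i <- s) 'X_i ^+ beta i) * top n Q.
Proof.
move=> hQ; elim: s => [|i s [ih1 ih2]]; first by rewrite !big_nil mul1r add0n.
have [h1 h2] := iterP i (beta i) ih1.
by rewrite /= !big_cons -addnA h2 ih2 mulrA; split.
Qed.

Lemma dpowP (beta : 'X_{1..m}) (Q : W) n : (msize Q <= n.+1)%N ->
  (msize (gdpow beta Q) <= (mdeg beta + n).+1)%N /\ top (mdeg beta + n) (gdpow beta Q) = 'X_[beta] * top n Q.
Proof.
move=> hQ; have := foldP beta (enum 'I_m) hQ.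
rewrite /gdpow mdegE mpolyXE_id big_enum /=.
rewrite (eq_bigl (fun _ => true)) // (eq_bigl (fun _ => true) (r := enum 'I_m)) //.
by rewrite big_enum.
Qed.
End Grad.


Section Grad2.
Variable F : fieldType.
Variable m : nat.
Local Notation W := {mpoly {mpoly F[m]}[m]}.
Local Notation top d P := (pihomog mdeg d (P : W)).

Lemma wmulP (P Q : W) n1 n2 : (msize P <= n1.+1)%N -> (msize Q <= n2.+1)%N ->
  (msize (gwmul P Q) <= (n1 + n2).+1)%N /\ top (n1 + n2) (gwmul P Q) = top n1 P * top n2 Q.
Proof.
move=> hP hQ; rewrite /gwmul; split.
  rewrite big_seq; apply: msize_sum_le => beta hb.
  have lt := leq_trans (msize_mdeg_lt hb) hP.
  have [h1 _] := dpowP beta hQ.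
  rewrite mul_mpolyC; apply: leq_trans (msizeZ_le _ _) _; apply: leq_trans h1 _.
  rewrite ltnS leq_add2r; by rewrite -ltnS.
rewrite raddf_sum /= [top n1 P]pihomogE big_distrl /= [RHS]big_mkcond /=.
apply: eq_big_seq => beta hb.
have lt := leq_trans (msize_mdeg_lt hb) hP.
have [h1 h2] := dpowP beta hQ.
rewrite mul_mpolyC linearZ /=; case: eqP => e.
  by rewrite e in h2; rewrite h2 -scalerAl.
rewrite top0 ?scaler0 //; apply: leq_trans h1 _; lia.
Qed.

Lemma bigP k d (G : 'I_k -> W) : (forall i, msize (G i) <= d.+1)%N ->
  (msize (\big[@gwmul F m/1%R]_(i < k) G i) <= (k * d).+1)%N /\
  top (k * d) (\big[@gwmul F m/1%R]_(i < k) G i) = \prod_(i < k) top d (G i).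
Proof.
elim: k G => [|k ih] G hG.
  by rewrite !big_ord0 mul0n msize1; split => //; rewrite topC // msize1.
rewrite !big_ord_recl.
have [h1 h2] := ih (fun i => G (lift ord0 i)) (fun i => hG _).
have [h3 h4] := wmulP (hG ord0) h1.
by rewrite mulSn; split => //; rewrite h4 h2.
Qed.
End Grad2.

Lemma wmulE m (P Q : weyl m) : wmul P Q = gwmul (F := CC) P Q.
Proof. reflexivity. Qed.


Section Ell.
Variable F : fieldType.
Variable m : nat.
Local Notation W := {mpoly {mpoly F[m]}[m]}.
Local Notation top d P := (pihomog mdeg d (P : W)).
Local Notation C x := (((x : F)%:MP : {mpoly F[m]})%:MP : W).
Local Notation Z j := ((('X_j : {mpoly F[m]}))%:MP : W).

Lemma msizeC1 (x : {mpoly F[m]}) : (msize (x%:MP : W) <= 1)%N.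
Proof. by rewrite msizeC; case: (_ != 0). Qed.

Lemma sumP1 (G : 'I_m -> W) : (forall j, msize (G j) <= 2)%N ->
  (msize (\sum_(j < m) G j) <= 2)%N /\ top 1 (\sum_(j < m) G j) = \sum_(j < m) top 1 (G j).
Proof. by move=> h; split; [apply: msize_sum_le | rewrite raddf_sum]. Qed.

Lemma addP1 (P Q : W) : (msize P <= 2)%N -> (msize Q <= 1)%N ->
  (msize (P + Q) <= 2)%N /\ top 1 (P + Q) = top 1 P.
Proof.
move=> hP hQ; split.
  by apply: leq_trans (msizeD_le _ _) _; rewrite geq_max hP (leq_trans hQ).
by rewrite pihomogD (top0 hQ) addr0.
Qed.

Lemma ZXP j : (msize (gwmul (Z j) 'X_j) <= 2)%N /\ top 1 (gwmul (Z j) 'X_j) = Z j * 'X_j.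
Proof.
have [h1 h2] := wmulP (msizeC1 ('X_j)) (msizeXi F j).
by rewrite add0n topC ?msizeC1 // topX in h1 h2.
Qed.

Lemma ellP p k (c : F) (a b : 'I_p -> F) :
  let E := \big[@gwmul F m/1%R]_(i < p) (gwmul (C c) (gwmul (Z k) 'X_k) + C (b i))
      - gwmul (\big[@gwmul F m/1%R]_(i < p) Z k)
          (\big[@gwmul F m/1%R]_(i < p) (gwmul (C c) (\sum_(j < m) gwmul (Z j) 'X_j) + C (a i))) in
  (msize E <= p.+1)%N /\
  top p E = \prod_(i < p) (C c * (Z k * 'X_k))
            - (\prod_(i < p) Z k) * \prod_(i < p) (C c * \sum_(j < m) Z j * 'X_j).
Proof.
move=> E.
have [hA1 hA2] : (msize (gwmul (C c) (gwmul (Z k) 'X_k)) <= 2)%N /\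
   top 1 (gwmul (C c) (gwmul (Z k) 'X_k)) = C c * (Z k * 'X_k).
  have [h1 h2] := ZXP k; have [h3 h4] := wmulP (msizeC1 (c%:MP)) h1.
  by rewrite add0n topC ?msizeC1 // h2 in h3 h4.
have [hS1 hS2] : (msize (gwmul (C c) (\sum_(j < m) gwmul (Z j) 'X_j)) <= 2)%N /\
   top 1 (gwmul (C c) (\sum_(j < m) gwmul (Z j) 'X_j)) = C c * \sum_(j < m) Z j * 'X_j.
  have [h1 h2] := sumP1 (fun j => proj1 (ZXP j)).
  have [h3 h4] := wmulP (msizeC1 (c%:MP)) h1.
  rewrite add0n topC ?msizeC1 // h2 in h3 h4; split => //; rewrite h4.
  by congr (_ * _); apply: eq_bigr => j _; rewrite (proj2 (ZXP j)).
have [b1 b2] := bigP (fun i => proj1 (addP1 hA1 (msizeC1 ((b i)%:MP)))).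
have [z1 z2] := bigP (d := 0) (fun i : 'I_p => msizeC1 ('X_k)).
have [a1 a2] := bigP (fun i => proj1 (addP1 hS1 (msizeC1 ((a i)%:MP)))).
have [w1 w2] := wmulP z1 a1.
rewrite muln1 in b1 b2 a1 a2; rewrite muln0 in z1 z2; rewrite muln0 add0n muln1 in w1 w2.
split.
  by apply: leq_trans (msizeD_le _ _) _; rewrite msizeN geq_max b1 w1.
rewrite pihomogB b2 w2 a2 z2; congr (_ - _ * _).
- by apply: eq_bigr => i _; rewrite (proj2 (addP1 hA1 _)) ?msizeC1.
- by apply: eq_bigr => i _; rewrite topC ?msizeC1.
- by apply: eq_bigr => i _; rewrite (proj2 (addP1 hS1 _)) ?msizeC1.
Qed.
End Ell.

Lemma ellE m p (a : 'I_p -> CC) (b : 'I_p -> 'I_m -> CC) k :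
  ell a b k =
  \big[@gwmul CC m/1%R]_(i < p) (gwmul ((p%:R^-1 : CC)%:MP%:MP) (gwmul (('X_k : {mpoly CC[m]})%:MP) 'X_k) + ((b i k - 1 : CC)%:MP%:MP))
      - gwmul (\big[@gwmul CC m/1%R]_(i < p) ('X_k : {mpoly CC[m]})%:MP)
          (\big[@gwmul CC m/1%R]_(i < p) (gwmul ((p%:R^-1 : CC)%:MP%:MP) (\sum_(j < m) gwmul (('X_j : {mpoly CC[m]})%:MP) 'X_j) + (a i)%:MP%:MP)).
Proof. reflexivity. Qed.


Section Ev.
Variable F : fieldType.
Variable m : nat.
Local Notation W := {mpoly {mpoly F[m]}[m]}.
Local Notation top d P := (pihomog mdeg d (P : W)).
Variables (z xi : 'I_m -> F).

Definition ev (P : W) : F := mmap (meval z) xi P.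

Lemma evM (P Q : W) : ev (P * Q) = ev P * ev Q.
Proof. exact: rmorphM. Qed.

Definition gpsymb (P : W) : F :=
  \sum_(beta <- msupp P | mdeg beta == (msize P).-1)
     (P@_beta).@[z] * \prod_(i < m) xi i ^+ beta i.

Lemma psymb_top (P : W) d : (msize P <= d.+1)%N -> top d P != 0 -> gpsymb P = ev (top d P).
Proof.
move=> h nz.
have e : msize P = d.+1.
  apply/eqP; rewrite eqn_leq h /=; rewrite ltnNge; apply: contra nz => h'.
  by rewrite top0.
rewrite /gpsymb e /= /ev pihomogE raddf_sum /=; apply: eq_bigr => beta _.
by rewrite mmapZ mmapX.
Qed.

Lemma evT p k (c : F) :
  ev (\prod_(i < p) ((c%:MP : {mpoly F[m]})%:MP * (('X_k : {mpoly F[m]})%:MP * 'X_k))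
            - (\prod_(i < p) ('X_k : {mpoly F[m]})%:MP) *
               \prod_(i < p) ((c%:MP : {mpoly F[m]})%:MP * \sum_(j < m) ('X_j : {mpoly F[m]})%:MP * 'X_j))
  = (c * (z k * xi k)) ^+ p - z k ^+ p * (c * \sum_(j < m) z j * xi j) ^+ p.
Proof.
have hC (x : F) : mmap (meval z) xi ((x%:MP : {mpoly F[m]})%:MP) = x.
  by rewrite mmapC; exact: mevalC.
have hZ j : mmap (meval z) xi (('X_j : {mpoly F[m]})%:MP) = z j.
  by rewrite mmapC; exact: mevalXU.
have hX j : mmap (meval z) xi ('X_j : W) = xi j.
  by rewrite mmapX mmap1U.
rewrite /ev rmorphB /= !rmorph_prod /= !prodr_const !card_ord.
rewrite !rmorphM /= !rmorphXn /= !rmorphM /= rmorph_sum /= hC hZ hX.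
congr (_ - _ * (_ * _) ^+ _).
by apply: eq_bigr => j _; rewrite rmorphM /= hZ hX.
Qed.
End Ev.

Lemma psymbE m (P : weyl m) z xi : psymb P z xi = gpsymb z xi P.
Proof. reflexivity. Qed.


Section Gen.
Variable F : fieldType.
Variable m : nat.
Local Notation W := {mpoly {mpoly F[m]}[m]}.

Lemma gwmul0 (P : W) : gwmul 0 P = 0.
Proof. by rewrite /gwmul msupp0 big_nil. Qed.

Lemma gdpow0 (P : W) : gdpow 0%MM P = P.
Proof. by rewrite /gdpow; elim: (enum 'I_m) => //= i s ->; rewrite mnm0E. Qed.

Lemma gwmul1 (P : W) : gwmul 1 P = P.
Proof. by rewrite /gwmul msupp1 big_seq1 mcoeff1 eqxx gdpow0 mul1r. Qed.

Definition Rg (p : nat) (ze : F) (y : 'I_m -> F) : F :=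
  \prod_(t : {ffun 'I_m -> 'I_p}) (1 - \sum_(j < m) ze ^+ (t j).+1 * y j).

Lemma core p (hp : (0 < p)%N) (c ze : F) (hc : c != 0)
  (roots : forall w : F, w ^+ p = 1 -> {t : 'I_p | w = ze ^+ t.+1})
  (y xi : 'I_m -> F) (k0 : 'I_m) (hk0 : xi k0 != 0) (hy : forall k, y k != 0)
  (hT : forall k, (c * (y k * xi k)) ^+ p - y k ^+ p * (c * \sum_(j < m) y j * xi j) ^+ p = 0) :
  Rg p ze y = 0.
Proof.
set s := \sum_(j < m) y j * xi j.
have hx k : xi k ^+ p = s ^+ p.
  have := hT k; move/eqP; rewrite subr_eq0 => /eqP h.
  have nz : c ^+ p * y k ^+ p != 0 by rewrite mulf_neq0 // expf_neq0.
  apply: (mulfI nz).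
  have -> : c ^+ p * y k ^+ p * xi k ^+ p = (c * (y k * xi k)) ^+ p by rewrite !exprMn mulrA.
  by rewrite h !exprMn mulrA [y k ^+ p * _]mulrC.
have s0 : s != 0.
  apply: contraNneq hk0 => s0; have := hx k0; rewrite s0 expr0n gtn_eqF //.
  by move/eqP; rewrite expf_eq0 hp.
have hw k : (xi k / s) ^+ p = 1.
  by rewrite exprMn exprVn hx divff // expf_neq0.
pose t := [ffun k => sval (roots _ (hw k))].
rewrite /Rg (bigD1 t) //=; apply/eqP; rewrite mulf_eq0; apply/orP; left.
rewrite subr_eq0; apply/eqP.
have -> : \sum_(j < m) ze ^+ (t j).+1 * y j = \sum_(j < m) (xi j / s) * y j.
  by apply: eq_bigr => j _; rewrite /t ffunE -(svalP (roots _ (hw j))).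
have -> : \sum_(j < m) xi j / s * y j = (\sum_(j < m) y j * xi j) / s.
  by rewrite mulr_suml; apply: eq_bigr => j _; rewrite mulrAC [xi j * _]mulrC.
by rewrite -/s divff.
Qed.
End Gen.


Section Sym.
Variable F : fieldType.
Variable m : nat.
Local Notation W := {mpoly {mpoly F[m]}[m]}.
Local Notation C x := (((x : F)%:MP : {mpoly F[m]})%:MP : W).
Local Notation Z j := ((('X_j : {mpoly F[m]}))%:MP : W).

Lemma symbolT p k (c : F) (a b : 'I_p -> F) (h2 : (2:F) != 0) (h2p : (2:F) ^+ p != 1)
  (hc : c != 0) (y xi : 'I_m -> F) :
  gpsymb y xi (\big[@gwmul F m/1%R]_(i < p) (gwmul (C c) (gwmul (Z k) 'X_k) + C (b i))
      - gwmul (\big[@gwmul F m/1%R]_(i < p) Z k)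
          (\big[@gwmul F m/1%R]_(i < p) (gwmul (C c) (\sum_(j < m) gwmul (Z j) 'X_j) + C (a i))))
  = (c * (y k * xi k)) ^+ p - y k ^+ p * (c * \sum_(j < m) y j * xi j) ^+ p.
Proof.
case: (ellP k c a b) => h1 h2'.
rewrite (psymb_top _ _ h1) ?h2' ?evT //.
apply/eqP => T0.
pose z' := fun j : 'I_m => if j == k then (2:F) else 0.
pose x' := fun j : 'I_m => (1:F).
have := congr1 (ev z' x') T0; rewrite evT /ev raddf0.
have -> : \sum_(j < m) z' j * x' j = 2.
  rewrite (bigD1 k) //= /z' /x' eqxx big1 ?addr0 ?mulr1 // => j /negbTE ->.
  by rewrite mul0r.
rewrite /z' /x' eqxx mulr1.
set u := (c * 2) ^+ p.
rewrite -{1}[u]mul1r -mulrBl => /eqP; rewrite mulf_eq0 => /orP[|].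
  by rewrite subr_eq0 eq_sym (negbTE h2p).
by rewrite /u expf_eq0 mulf_eq0 (negbTE hc) (negbTE h2) andbF.
Qed.
End Sym.


Lemma roots_gen (F : fieldType) (p : nat) (z : F) : (0 < p)%N -> z ^+ p = 1 ->
  (forall j, (0 < j < p)%N -> z ^+ j != 1) ->
  forall w, w ^+ p = 1 -> {t : 'I_p | w = z ^+ t.+1}.
Proof.
move=> hp zp hj w wp.
have pr : p.-primitive_root z.
  apply/andP; split => //; apply/forallP => i; rewrite unity_rootE.
  have := ltn_ord i; rewrite leq_eqVlt => /orP[/eqP e | lt].
    by rewrite e zp !eqxx.
  by rewrite (negbTE (hj _ _)) ?ltn_eqF //.
have [i ->] := prim_rootP pr wp.
case: (posnP i) => [i0 | ipos].
  have lt : (p.-1 < p)%N by lia.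
  by exists (Ordinal lt) => /=; rewrite prednK // i0 expr0 zp.
have lt : (i.-1 < p)%N by have := ltn_ord i; lia.
by exists (Ordinal lt) => /=; rewrite prednK.
Qed.

Lemma CmulE (a b c d : R) : (Complex a b : CC) * Complex c d = Complex (a * c - b * d) (a * d + b * c).
Proof. by []. Qed.

Lemma C1E : (1 : CC) = Complex 1 0.
Proof. by []. Qed.

Section Zeta.
Variable p : nat.
Hypothesis hp : (0 < p)%N.
Let th : R := 2 * PI / INR p.

Lemma INRp0 : INR p <> R0.
Proof. apply: not_0_INR; lia. Qed.

Lemma zeta_th : zeta p = Complex (cos th) (sin th).
Proof. by rewrite /zeta /th INRE. Qed.

Lemma zeta_pow j : zeta p ^+ j = Complex (cos (INR j * th)) (sin (INR j * th)).
Proof.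
elim: j => [|j ih].
  rewrite expr0 C1E; congr Complex; rewrite Rmult_0_l ?cos_0 ?sin_0 //.
rewrite exprSr ih zeta_th CmulE S_INR Rmult_plus_distr_r Rmult_1_l cos_plus sin_plus.
by congr Complex; rewrite Rplus_comm.
Qed.

Lemma zeta_p : zeta p ^+ p = 1.
Proof.
rewrite zeta_pow C1E.
have -> : Rmult (INR p) th = Rmult 2 PI by rewrite /th; field; exact: INRp0.
by rewrite cos_2PI sin_2PI.
Qed.

Lemma zeta_prim j : (0 < j < p)%N -> zeta p ^+ j != 1.
Proof.
move=> /andP[j0 jp]; rewrite zeta_pow C1E; apply/negP => /eqP [hc hs].
have hth : Rlt 0 th.
  rewrite /th; apply: Rdiv_lt_0_compat; first by have := PI_RGT_0; lra.
  apply: lt_0_INR; lia.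
have hjp : Rlt (INR j) (INR p) by apply: lt_INR; lia.
have hj0 : Rlt 0 (INR j) by apply: lt_0_INR; lia.
have hthp : Rmult th (INR p) = Rmult 2 PI by rewrite /th; field; exact: INRp0.
have x0 : Rlt 0 (Rmult (INR j) th) by nra.
have x2 : Rlt (Rmult (INR j) th) (Rmult 2 PI) by nra.
have := PI_RGT_0 => hpi.
case: (Rtotal_order (INR j * th) PI) => [hx|[hx|hx]].
- have := sin_gt_0 _ x0 hx; rewrite hs; exact: Rlt_irrefl.
- have h1 : Rlt (cos PI) (IZR 1) by rewrite cos_PI; lra.
  by rewrite -hx hc in h1; exact: Rlt_irrefl h1.
- have := sin_lt_0 _ hx x2; rewrite hs; exact: Rlt_irrefl.
Qed.

Lemma zeta_roots (w : CC) : w ^+ p = 1 -> {t : 'I_p | w = zeta p ^+ t.+1}.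
Proof. exact: roots_gen hp zeta_p zeta_prim w. Qed.
End Zeta.


Lemma ReD (x y : CC) : complex.Re (x + y) = complex.Re x + complex.Re y.
Proof. case: x => a b; case: y => c d; reflexivity. Qed.

Lemma Re_nat n : complex.Re (n%:R : CC) = n%:R.
Proof. elim: n => [|n ih] //; by rewrite mulrSr ReD ih mulrSr. Qed.

Lemma natC_neq0 n : (0 < n)%N -> (n%:R : CC) != 0.
Proof.
move=> hn; apply/negP => /eqP h; have := congr1 (@complex.Re R) h.
rewrite Re_nat => /eqP; rewrite pnatr_eq0 => /eqP n0; move: hn; rewrite n0.
done.
Qed.

Lemma natC_inj n k : (n%:R : CC) = k%:R -> n = k.
Proof.
move=> h; have := congr1 (@complex.Re R) h; rewrite !Re_nat => /eqP.
by rewrite eqr_nat => /eqP.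
Qed.


Section FP.
Variable F : fieldType.
Variable m p : nat.
Definition fpoly (ze : F) : {mpoly F[m]} :=
  (\prod_(k < m) 'X_k) * \prod_(t : {ffun 'I_m -> 'I_p}) (1 - \sum_(j < m) (ze ^+ (t j).+1)%:MP * 'X_j).

Lemma fpolyE ze y : (fpoly ze).@[y] = (\prod_(k < m) y k) * Rg p ze y.
Proof.
rewrite /fpoly /Rg rmorphM /= !rmorph_prod /=; congr (_ * _).
  by apply: eq_bigr => k _; rewrite mevalXU.
apply: eq_bigr => t _; rewrite rmorphB /= rmorph1 rmorph_sum /=; congr (_ - _).
by apply: eq_bigr => j _; rewrite rmorphM /= mevalC mevalXU.
Qed.
End FP.

Lemma RpolyE m p y : Rpoly p y = Rg (m:=m) p (zeta p) y.
Proof. reflexivity. Qed.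

Theorem mainTheorem12 (m p : nat) (hp : (0 < p)%N)
    (a : 'I_p -> CC) (b : 'I_p -> 'I_m -> CC)
    (hb : forall (i : 'I_p) (k : 'I_m), nat_of_ord i = p.-1 -> b i k = 1)
    (x : 'I_m -> CC) :
  sing_locus (in_left_ideal (ell a b)) x ->
  (\prod_(k < m) x k) * Rpoly p x = 0.
Proof.
move=> hx; rewrite RpolyE -fpolyE; apply: hx => y [xi [[k0 hk0] hch]].
rewrite fpolyE.
have [hy|hy] := boolP [forall k, y k != 0]; last first.
  move: hy; rewrite negb_forall => /existsP [k]; rewrite negbK => /eqP yk.
  by rewrite (bigD1 k) //= yk !mul0r.
have h2 : (2 : CC) != 0 by exact: (natC_neq0 (n := 2)).
have h2p : (2 : CC) ^+ p != 1.
  apply/eqP => e; have : (2 ^ p)%:R = (1%:R : CC) by rewrite natrX.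
  move/natC_inj => e2; have : (1 < 2 ^ p)%N by rewrite -{1}(expn0 2) ltn_exp2l.
  by rewrite e2.
have hc : (p%:R^-1 : CC) != 0 by rewrite invr_eq0 natC_neq0.
rewrite (core hp hc (zeta_roots hp) hk0 (y := y)) ?mulr0 //.
  by move=> k; exact: (forallP hy k).
move=> k.
have mem : in_left_ideal (ell a b) (ell a b k).
  exists (fun j => if j == k then 1 else 0).
  rewrite (bigD1 k) //= eqxx big1 ?addr0.
    by rewrite wmulE gwmul1.
  by move=> j /negbTE ->; rewrite wmulE gwmul0.
have := hch _ mem; rewrite psymbE ellE symbolT //.
Qed.
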